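(* There exist a unique length-preserving map $u\mapsto w_u$ from $\{0,1,2\}^*$ to $\{0,1\}^*$ and a unique map $u\mapsto s_u$ from $\{0,1,2\}^*$ to $\mathcal{S}$ such that for every $u\in\{0,1,2\}^*$: $w_u$ is a prefix of $w_{ua}$ for every $a\in\{0,1,2\}$, and $\mathrm{val}_{\mathcal{F}}(u)=\mathrm{val}_{\mathcal{F}}(w_us_u)$. Moreover, there is a unique map $\lambda:\{0,1,2\}^+\to\{0,1\}$, $v\mapsto\lambda_v$, such that $w_{ua}=w_u\lambda_{ua}$ for every $u\in\{0,1,2\}^*$ and $a\in\{0,1,2\}$.
   Context: Fibonacci numbers: $F_0=1$, $F_1=2$, $F_n=F_{n-1}+F_{n-2}$ for $n\ge2$. For a word $w=w_{k-1}\cdots w_0$ over $\{0,1,2\}$ (digits indexed from the right), $\mathrm{val}_{\mathcal{F}}(w)=\sum_{i=0}^{k-1}w_iF_i$. $\mathcal{S}=\{000,001,010,100,101\}$. *)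

(* Defs.v *)
From mathcomp Require Import all_boot.
Set Implicit Arguments. Unset Strict Implicit. Unset Printing Implicit Defensive.

Fixpoint fibF (n : nat) : nat :=
  match n with
  | 0 => 1
  | 1 => 2
  | (m.+1 as k).+1 => fibF k + fibF m
  end.

(* A word w = w_{k-1} ... w_0 is represented by the sequence
   [:: w_{k-1}; ...; w_0] (leftmost letter first); digits are indexed from
   the right, so digit w_i is  nth 0 (rev w) i. *)
Definition valF (w : seq nat) : nat :=
  \sum_(i < size w) nth 0 (rev w) i * fibF i.

Definition word3 := seq 'I_3.
Definition word2 := seq 'I_2.

Definition natw3 (u : word3) : seq nat := map (@nat_of_ord 3) u.
Definition natw2 (u : word2) : seq nat := map (@nat_of_ord 2) u.

Definition S_set : seq (seq nat) :=
  [:: [:: 0; 0; 0]; [:: 0; 0; 1]; [:: 0; 1; 0]; [:: 1; 0; 0]; [:: 1; 0; 1]].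

Definition good_pair (w : word3 -> word2) (s : word3 -> word2) : Prop :=
  forall u : word3,
    [/\ size (w u) = size u,
        natw2 (s u) \in S_set,
        (forall a : 'I_3, prefix (w u) (w (rcons u a)))
      & valF (natw3 u) = valF (natw2 (w u ++ s u))].

(* lambda : {0,1,2}^+ -> {0,1}, with w_{ua} = w_u lambda_{ua}.
   lambda is given as a total map on words; only its values on nonempty
   words matter. *)
Definition good_lambda (w : word3 -> word2) (lam : word3 -> 'I_2) : Prop :=
  forall (u : word3) (a : 'I_3), w (rcons u a) = rcons (w u) (lam (rcons u a)).

(* Main.v *)
Require Import Defs.
From mathcomp Require Import all_boot.
From mathcomp Require Import zify.
Set Implicit Arguments. Unset Strict Implicit.

Fixpoint W (k : nat) (l : seq nat) : nat :=
  match l with [::] => 0 | d :: l' => d * fibF k + W k.+1 l' end.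

Lemma W_sum l k : \sum_(i < size l) nth 0 l i * fibF (i + k) = W k l.
Proof.
elim: l k => [|d l IH] k /=; first by rewrite big_ord0.
rewrite big_ord_recl -IH; congr (_ + _); apply: eq_bigr => i _.
by rewrite lift0 addSnnS.
Qed.

Definition V k (x : seq nat) := W k (rev x).

Lemma valFV x : valF x = V 0 x.
Proof. by rewrite /valF /V -W_sum size_rev; apply: eq_bigr => i _; rewrite addn0. Qed.

Lemma fibSS k : fibF k.+2 = fibF k.+1 + fibF k.
Proof. by case: k. Qed.

Lemma W_cons d l k : W k (d :: l) = d * fibF k + W k.+1 l. Proof. by []. Qed.

Lemma WSS l k : W k.+2 l = W k.+1 l + W k l.
Proof. elim: l k => [|d l IH] k //; rewrite !W_cons IH fibSS; lia. Qed.

Lemma VSS x k : V k.+2 x = V k.+1 x + V k x.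
Proof. exact: WSS. Qed.

Lemma V_rcons x a k : V k (rcons x a) = a * fibF k + V k.+1 x.
Proof. by rewrite /V rev_rcons. Qed.

Lemma W_cat l1 l2 k : W k (l1 ++ l2) = W k l1 + W (size l1 + k) l2.
Proof. elim: l1 k => [|d l IH] k //; rewrite cat_cons !W_cons IH -addSnnS [size (_ :: _)]/=; lia. Qed.

Lemma V_cat x y k : V k (x ++ y) = V k y + V (size y + k) x.
Proof. by rewrite /V rev_cat W_cat size_rev. Qed.

Definition b2o (b : bool) : 'I_2 := if b then @Ordinal 2 1 isT else @Ordinal 2 0 isT.
Lemma b2oE b : nat_of_ord (b2o b) = b. Proof. by case: b. Qed.

Definition o0 : 'I_2 := @Ordinal 2 0 isT.
Definition o1 : 'I_2 := @Ordinal 2 1 isT.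

Definition sword (d : nat) : word2 :=
  match d with
  | 0 => [:: o0; o0; o0] | 1 => [:: o0; o0; o1] | 2 => [:: o0; o1; o0]
  | 3 => [:: o1; o0; o0] | _ => [:: o1; o0; o1] end.

Definition nst (st : nat * nat) (a : nat) : bool * (nat * nat) :=
  let t := st.2 + a in let lam := 5 <= t in
  (lam, (t - 5 * lam, st.1 + st.2 + 2 * a - 8 * lam)).

Definition stepf (p : word2 * (nat * nat)) (a : 'I_3) :=
  let r := nst p.2 a in (rcons p.1 (b2o r.1), r.2).

Definition run (u : word3) := foldl stepf ([::], (0, 0)) u.

Definition L : seq (nat * nat) :=
  [:: (0,0); (1,2); (2,4); (2,3); (3,5); (4,7); (4,6); (0,1); (3,6); (1,1)].

Definition okst (st : nat * nat) (a : nat) :=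
  [&& (nst st a).2 \in L, 8 * (nst st a).1 <= st.1 + st.2 + 2 * a &
      st.2 + a < 10].

Lemma L_ok : all (fun st => all (okst st) [:: 0; 1; 2]) L.
Proof. by []. Qed.

Lemma L_le4 : all (fun st => st.1 <= 4) L.
Proof. by []. Qed.

Lemma sword_ok d : d <= 4 -> natw2 (sword d) \in S_set /\ V 0 (natw2 (sword d)) = d /\ size (sword d) = 3.
Proof. by case: d => [|[|[|[|[|]]]]]. Qed.

Lemma S_uniq : all (fun x => all (fun y => (V 0 x == V 0 y) ==> (x == y)) S_set) S_set.
Proof. by []. Qed.

Lemma S_inj (x y : word2) : natw2 x \in S_set -> natw2 y \in S_set ->
  V 0 (natw2 x) = V 0 (natw2 y) -> x = y.
Proof.
move=> hx hy e. have := allP S_uniq _ hx => /allP /(_ _ hy) /implyP /(_ (introT eqP e)) /eqP.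
by move/(inj_map val_inj).
Qed.

Lemma S_small x : x \in S_set -> V 0 x <= 4 /\ size x = 3.
Proof.
have h : all (fun x => (V 0 x <= 4) && (size x == 3)) S_set by [].
by move=> /(allP h) /andP [-> /eqP ->].
Qed.

Lemma run_rcons u a : run (rcons u a) = stepf (run u) a.
Proof. by rewrite /run foldl_rcons. Qed.

Lemma run_inv u : [/\ (run u).2 \in L, size (run u).1 = size u,
  V 0 (natw3 u) = V 3 (natw2 (run u).1) + (run u).2.1 &
  V 1 (natw3 u) = V 4 (natw2 (run u).1) + (run u).2.2].
Proof.
elim/last_ind: u => [|u a [hL hs e0 e1]]; first by [].
rewrite run_rcons; case: (run u) hL hs e0 e1 => w [d0 d1] /= hL hs e0 e1.
have ha : nat_of_ord a \in [:: 0; 1; 2] by case: a => [[|[|[|]]]].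
have /and3P [hL' hle hlt] := allP (allP L_ok _ hL) a ha.
have f0 : fibF 0 = 1 by []. have f1 : fibF 1 = 2 by [].
have f3 : fibF 3 = 5 by []. have f4 : fibF 4 = 8 by [].
move: e0 e1 hle hlt; rewrite /natw3 /natw2 !map_rcons !V_rcons b2oE !size_rcons hs /nst /=.
move=> e0 e1 hle hlt; split => //; rewrite ?f0 ?f1 ?f3 ?f4.
- rewrite e1; case: (ltnP 4 (d1 + a)) hle hlt => h /=; lia.
- rewrite [V 2 _]VSS e0 e1 [V 5 _]VSS; case: (ltnP 4 (d1 + a)) hle hlt => h /=; lia.
Qed.

Lemma good_val w s u : good_pair w s ->
  V 0 (natw3 u) = V 3 (natw2 (w u)) + V 0 (natw2 (s u)) /\ V 0 (natw2 (s u)) <= 4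
  /\ natw2 (s u) \in S_set.
Proof.
move=> /(_ u) [_ hS _ e]; have [h4 h3] := S_small hS.
by rewrite -valFV e valFV /natw2 map_cat V_cat -/(natw2 (s u)) h3 addnC.
Qed.

Definition w0 (u : word3) : word2 := (run u).1.
Definition s0 (u : word3) : word2 := sword (run u).2.1.

Lemma good0 : good_pair w0 s0.
Proof.
move=> u; have [hL hs e0 e1] := run_inv u.
have h4 : (run u).2.1 <= 4 by have /allP := L_le4; apply.
have [hS [hv h3]] := sword_ok h4.
split => //.
- by move=> a; rewrite /w0 run_rcons /stepf /=; apply: prefix_rcons.
- by rewrite !valFV /s0 /w0 /natw2 map_cat V_cat size_map -/(natw2 (sword _)) hv h3 e0 addnC.
Qed.

Lemma w0_rcons u a : exists l : 'I_2, w0 (rcons u a) = rcons (w0 u) l.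
Proof. by rewrite /w0 run_rcons; eexists. Qed.

Lemma uniq0 w s : good_pair w s -> forall u, w u = w0 u /\ s u = s0 u.
Proof.
move=> g; elim/last_ind => [|u a [IHw IHs]].
  have [hs _ _ _] := g [::]; move: hs => /size0nil hw; rewrite hw; split => //.
  have [e [h4 hS]] := good_val [::] g; have [e' [h4' hS']] := good_val [::] good0.
  apply: S_inj => //; move: e e'; rewrite /w0 hw /=; lia.
have [hs _ hp _] := g u; have [hs' _ _ _] := g (rcons u a).
move: (hp a) => /prefixP [t ht].
have [l0 hl0] := w0_rcons u a.
have : size t = 1.
 move: hs'; rewrite ht size_cat size_rcons hs. move=> h; apply/eqP; by rewrite -(eqn_add2l (size u)) h addn1.
case: t ht => [|l [|]] // ht _; rewrite cats1 IHw in ht.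
have [e [h4 hS]] := good_val (rcons u a) g; have [e' [h4' hS']] := good_val (rcons u a) good0.
move: e e'; rewrite ht hl0 /natw2 !map_rcons !V_rcons -/(natw2 (w0 u)).
have f3 : fibF 3 = 5 by [].
rewrite f3 -/(natw2 (s (rcons u a))) -/(natw2 (s0 (rcons u a))) => e e'.
have ll : nat_of_ord l = l0 by move: (ltn_ord l) (ltn_ord l0); lia.
have -> : l = l0 by apply: val_inj.
split => //; apply: S_inj => //; lia.
Qed.

Theorem proposition5p4 :
  exists (w : word3 -> word2) (s : word3 -> word2),
    [/\ good_pair w s,
        (forall w' s', good_pair w' s' -> forall u, w' u = w u /\ s' u = s u)
      & exists lam : word3 -> 'I_2,
          good_lambda w lam /\
          (forall lam', good_lambda w lam' ->
             forall v : word3, v != [::] -> lam' v = lam v)].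
Proof.
exists w0, s0; split; [exact: good0 | exact: uniq0 |].
exists (fun v => last ord0 (w0 v)); split.
  by move=> u a; have [l ->] := w0_rcons u a; rewrite last_rcons.
move=> lam' g; case/lastP => [|u a] // _.
have [l hl] := w0_rcons u a; have := g u a; rewrite hl last_rcons.
by case/rcons_inj.
Qed.
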